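(* Let $P$ be a group property preserved under quotients, let $k\ge2$ be an integer and $\rho:\mathbb{N}\to[0,1]$. Then for every $l$ divisible by $3$, $$\mathbb{P}(\Gamma\in\mathcal{B}(k,l,\rho)\text{ has }P)\ge\mathbb{P}(\Gamma'\in\mathcal{B}'(k,l,\rho)\text{ has }P).$$ In particular, if a random group in $\mathcal{B}'(k,l,\rho)$ has $P$ asymptotically almost surely (as $l\to\infty$ through multiples of $3$), then so does a random group in $\mathcal{B}(k,l,\rho)$.
   Context: Gromov binomial model $\mathcal{B}(k,l,\rho)$: $\Gamma=\langle\mathcal{A}\mid\mathcal{R}\rangle$ with $|\mathcal{A}|=k$, where each cyclically reduced word of length $l$ in $\mathcal{A}\cup\mathcal{A}^{-1}$ is put in $\mathcal{R}$ independently with probability $\rho(l)$. For $l$ divisible by $3$, $W'_{l/3}$ is the set of reduced words of length $l/3$ in $\mathcal{A}\cup\mathcal{A}^{-1}$ whose first and last letters lie in $\mathcal{A}$, and $W'_l$ is the set of words of length $l$ that are concatenations of three words of $W'_{l/3}$. Model $\mathcal{B}'(k,l,\rho)$: $\Gamma'=\langle\mathcal{A}\mid\mathcal{R}\rangle$ with $|\mathcal{A}|=k$, where each word of $W'_l$ is put in $\mathcal{R}$ independently with probability $\rho(l)$. A property is preserved under quotients if whenever a group has it, so does every quotient. *)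

(* Defs.v *)
From HB Require Import structures.
From mathcomp Require Import all_boot all_order all_algebra.
From mathcomp Require Import boolp reals.
Set Implicit Arguments. Unset Strict Implicit. Unset Printing Implicit Defensive.
Import Order.TTheory GRing.Theory Num.Theory.

Record gstruct := GStruct {
  gcar :> Type;
  geq : gcar -> gcar -> Prop;
  gmul : gcar -> gcar -> gcar;
  ginv : gcar -> gcar;
  gone : gcar }.
Arguments geq {g} _ _.
Arguments gmul {g} _ _.
Arguments ginv {g} _.

Definition is_group (G : gstruct) : Prop :=
  (forall x : G, geq x x) /\
  (forall x y : G, geq x y -> geq y x) /\
  (forall x y z : G, geq x y -> geq y z -> geq x z) /\
  (forall x x' y y' : G, geq x x' -> geq y y' -> geq (gmul x y) (gmul x' y')) /\
  (forall x x' : G, geq x x' -> geq (ginv x) (ginv x')) /\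
  (forall x y z : G, geq (gmul x (gmul y z)) (gmul (gmul x y) z)) /\
  (forall x, geq (gmul (gone G) x) x /\ geq (gmul x (gone G)) x) /\
  (forall x, geq (gmul (ginv x) x) (gone G) /\ geq (gmul x (ginv x)) (gone G)).

Definition is_hom (G H : gstruct) (f : G -> H) : Prop :=
  (forall x y : G, geq x y -> geq (f x) (f y)) /\
  (forall x y : G, geq (f (gmul x y)) (gmul (f x) (f y))).

Definition surj_hom (G H : gstruct) (f : G -> H) : Prop :=
  forall y : H, exists x : G, geq (f x) y.

Definition preserved_under_quotients (P : gstruct -> Prop) : Prop :=
  forall (G H : gstruct) (f : G -> H),
    is_group G -> is_group H -> is_hom f -> surj_hom f -> P G -> P H.

(* (i, true) is the generator a_i, (i, false) is a_i^{-1}. *)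
Definition letter (k : nat) := ('I_k * bool)%type.
Definition linv k (x : letter k) : letter k := (x.1, ~~ x.2).

Fixpoint reduced k (w : seq (letter k)) : bool :=
  match w with
  | x :: ((y :: _) as t) => (y != linv x) && reduced t
  | _ => true
  end.

Definition cyc_reduced k (w : seq (letter k)) : bool :=
  reduced w && (if w is x :: t then last x t != linv x else true).

Definition Wp1 k (w : seq (letter k)) : bool :=
  reduced w && (if w is x :: t then x.2 && (last x t).2 else true).

Definition Wl k l : {set l.-tuple (letter k)} :=
  [set w : l.-tuple (letter k) | cyc_reduced w].

Definition Wpl k l : {set l.-tuple (letter k)} :=
  [set w : l.-tuple (letter k) |
    [exists u : (l %/ 3).-tuple (letter k), exists v : (l %/ 3).-tuple (letter k),
     exists z : (l %/ 3).-tuple (letter k),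
       [&& Wp1 u, Wp1 v, Wp1 z & val w == u ++ v ++ z]]].

Inductive pres_eq k (Rel : seq (letter k) -> Prop) :
    seq (letter k) -> seq (letter k) -> Prop :=
| pe_refl w : pres_eq Rel w w
| pe_sym w1 w2 : pres_eq Rel w1 w2 -> pres_eq Rel w2 w1
| pe_trans w1 w2 w3 : pres_eq Rel w1 w2 -> pres_eq Rel w2 w3 -> pres_eq Rel w1 w3
| pe_cancel u x v : pres_eq Rel (u ++ x :: linv x :: v) (u ++ v)
| pe_rel u r v : Rel r -> pres_eq Rel (u ++ r ++ v) (u ++ v).

Definition presented k (Rel : seq (letter k) -> Prop) : gstruct :=
  @GStruct (seq (letter k)) (pres_eq Rel) (fun u v => u ++ v)
           (fun u => rev (map (@linv k) u)) [::].

Definition pres_of_set k l (Rs : {set l.-tuple (letter k)}) : gstruct :=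
  presented (fun w : seq (letter k) => exists2 r : l.-tuple (letter k), r \in Rs & val r = w).

(* Probability that the random group < A | R > has P, where each element of S
   is put in R independently with probability p. *)
Definition prob_has (R : realType) k l (S : {set l.-tuple (letter k)}) (p : R)
    (P : gstruct -> Prop) : R :=
  \sum_(Rs : {set l.-tuple (letter k)} | Rs \subset S)
     (p ^+ #|Rs| * (1 - p) ^+ #|S :\: Rs| * (asbool (P (pres_of_set Rs)))%:R)%R.

Definition probB (R : realType) k l (rho : nat -> R) P := prob_has (Wl k l) (rho l) P.
Definition probB' (R : realType) k l (rho : nat -> R) P := prob_has (Wpl k l) (rho l) P.

(* Main.v *)
Require Import Defs.
Set Warnings "-notation-overridden,-ambiguous-paths".
Set Implicit Arguments. Unset Strict Implicit.
From HB Require Import structures.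
From mathcomp Require Import all_boot all_order all_algebra.
From mathcomp Require Import boolp reals ring.
Import Order.TTheory GRing.Theory Num.Theory.
Local Open Scope ring_scope.

Section Pres.
Variables (k : nat) (Rel : seq (letter k) -> Prop).
Local Notation E := (pres_eq Rel).
Local Notation inv := (fun u : seq (letter k) => rev (map (@linv k) u)).

Lemma pe_catr y x x' : E x x' -> E (x ++ y) (x' ++ y).
Proof.
elim => [w|w1 w2 _ IH|w1 w2 w3 _ IH1 _ IH2|u a v|u r v Rr].
- exact: pe_refl.
- exact: pe_sym.
- exact: pe_trans IH1 IH2.
- have := pe_cancel Rel u a (v ++ y); by rewrite -!catA.
- have := pe_rel u (v ++ y) Rr; by rewrite -!catA.
Qed.

Lemma pe_catl y x x' : E x x' -> E (y ++ x) (y ++ x').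
Proof.
elim => [w|w1 w2 _ IH|w1 w2 w3 _ IH1 _ IH2|u a v|u r v Rr].
- exact: pe_refl.
- exact: pe_sym.
- exact: pe_trans IH1 IH2.
- have := pe_cancel Rel (y ++ u) a v; by rewrite -!catA.
- have := pe_rel (y ++ u) v Rr; by rewrite -!catA.
Qed.

Lemma linvK (a : letter k) : linv (linv a) = a.
Proof. by case: a => i b; rewrite /linv /= negbK. Qed.

Lemma pe_invl u : E (inv u ++ u) [::].
Proof.
elim: u => [|a u IH] /=; first exact: pe_refl.
rewrite rev_cons -cats1 -catA /=.
apply: pe_trans IH.
have := pe_cancel Rel (rev (map (@linv k) u)) (linv a) u; by rewrite linvK.
Qed.

Lemma pe_invr u : E (u ++ inv u) [::].
Proof.
elim: u => [|a u IH] /=; first exact: pe_refl.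
rewrite rev_cons -cats1.
apply: pe_trans (pe_cancel Rel [::] a [::]).
rewrite catA; have H := pe_catl [:: a] (pe_catr [:: linv a] IH); exact H.
Qed.

Lemma presented_group : is_group (presented Rel).
Proof.
rewrite /is_group /=.
split; first exact: pe_refl.
split; first exact: pe_sym.
split; first exact: pe_trans.
split.
  move=> x x' y y' Hx Hy; exact: pe_trans (pe_catr y Hx) (pe_catl x' Hy).
split.
  move=> x x' H.
  apply: (pe_trans (w2 := inv x ++ x ++ inv x')).
    apply: pe_sym; apply: pe_trans (pe_catl (inv x) (pe_catr (inv x') H)) _.
    have := pe_catl (inv x) (pe_invr x'); by rewrite cats0.
  rewrite catA; exact: (pe_catr (inv x') (pe_invl x)).
split; first by move=> x y z; rewrite catA; exact: pe_refl.
split; first by move=> x; rewrite cats0; split; exact: pe_refl.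
move=> x; split; [exact: pe_invl | exact: pe_invr].
Qed.
End Pres.

Lemma pe_mono k (R1 R2 : seq (letter k) -> Prop) x y :
  (forall w, R1 w -> R2 w) -> pres_eq R1 x y -> pres_eq R2 x y.
Proof.
move=> H; elim => [w|w1 w2 _ IH|w1 w2 w3 _ IH1 _ IH2|u a v|u r v Rr].
- exact: pe_refl.
- exact: pe_sym.
- exact: pe_trans IH1 IH2.
- exact: pe_cancel.
- exact: pe_rel (H _ Rr).
Qed.

Lemma quot_sub (P : gstruct -> Prop) k l (A B : {set l.-tuple (letter k)}) :
  preserved_under_quotients P -> A \subset B ->
  P (pres_of_set A) -> P (pres_of_set B).
Proof.
move=> PQ AB; apply: (PQ (pres_of_set A) (pres_of_set B) (fun w => w)); try exact: presented_group.
- split => /= [x y|x y]; last exact: pe_refl.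
  apply: pe_mono => w [r rA <-]; exists r => //; exact: (subsetP AB).
- move=> y; exists y; exact: pe_refl.
Qed.

Section Words.
Variable k : nat.

Lemma reduced_cons_cat (x : letter k) s t : reduced (x :: s) -> reduced t ->
  (if t is y :: _ then y != linv (last x s) else true) -> reduced (x :: s ++ t).
Proof.
elim: s x => [|y s IH] x /=.
  by case: t => [|z t] //= _ Ht Hj; rewrite Hj Ht.
move=> /andP[Hy Hs] Ht Hj; rewrite Hy /=; exact: IH.
Qed.

Lemma pos_neq (a y : letter k) : y.2 -> a.2 -> y != linv a.
Proof. by move=> Hy Ha; apply/eqP => E; move: Hy; rewrite E /= Ha. Qed.

Lemma Wp1_cat (s t : seq (letter k)) : Wp1 s -> Wp1 t -> Wp1 (s ++ t).
Proof.
case: s => [|x s] //; case: t => [|y t]; first by rewrite cats0.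
rewrite /Wp1 => /andP[rs /andP[px pl]] /andP[rt /andP[py pl']].
apply/andP; split; last by rewrite px last_cat /= pl'.
by apply: reduced_cons_cat => //=; exact: pos_neq.
Qed.

Lemma Wp1_cyc (w : seq (letter k)) : Wp1 w -> cyc_reduced w.
Proof.
case: w => [|x t] //; rewrite /Wp1 /cyc_reduced => /andP[r /andP[px pl]].
by rewrite r /=; exact: pos_neq.
Qed.

Lemma Wpl_sub l : Wpl k l \subset Wl k l.
Proof.
apply/subsetP => w; rewrite /Wpl /Wl !inE.
case/existsP => u /existsP[v /existsP[z /and4P[hu hv hz /eqP hw]]].
by rewrite hw; apply: Wp1_cyc; apply: Wp1_cat => //; exact: Wp1_cat.
Qed.
End Words.
Section Comb.
Variables (R : comNzRingType) (T : finType).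

Lemma split_sub (U : {set T}) x (F : {set T} -> R) : x \in U ->
  \sum_(Rs : {set T} | Rs \subset U) F Rs =
  \sum_(Rs : {set T} | Rs \subset U :\ x) (F Rs + F (x |: Rs)).
Proof.
move=> xU; rewrite big_split /= (bigID (fun Rs : {set T} => x \in Rs)) /= addrC.
congr (_ + _).
  by apply: eq_bigl => Rs; rewrite subsetD1.
rewrite (reindex_onto (fun B => x |: B) (fun Rs => Rs :\ x)) /=; last first.
  by move=> Rs /andP[_ xR]; rewrite setD1K.
apply: eq_bigl => j; rewrite setU11 andbT subsetD1.
case: (boolP (x \in j)) => xj /=.
  rewrite andbF; apply/negbTE; apply/negP => /andP[_ /eqP E].
  by move: xj; rewrite -E !inE eqxx.
rewrite setU1K // eqxx andbT.
by rewrite subUset sub1set xU andbT.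
Qed.

Variable S : {set T}.

Lemma sum_restrict (p : R) (f : {set T} -> R) n : forall U, #|U :\: S| = n -> S \subset U ->
 \sum_(Rs : {set T} | Rs \subset U) p ^+ #|Rs| * (1 - p) ^+ #|U :\: Rs| * f (Rs :&: S) =
 \sum_(Rs : {set T} | Rs \subset S) p ^+ #|Rs| * (1 - p) ^+ #|S :\: Rs| * f Rs.
Proof.
elim: n => [|n IH] U hn SU.
  have -> : U = S.
    apply/eqP; rewrite eqEsubset SU andbT -setD_eq0 -cards_eq0; exact/eqP.
  by apply: eq_bigr => Rs RsS; rewrite (setIidPl RsS).
have : (0 < #|U :\: S|)%N by rewrite hn.
case/card_gt0P => x; rewrite inE => /andP[xS xU].
rewrite (@split_sub U x _ xU) -(IH (U :\ x)); first last.
- by rewrite subsetD1 SU xS.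
- move: hn; rewrite (cardsD1 x) inE xS xU add1n => -[<-]; congr (#|_|); by rewrite !setDDl setUC.
apply: eq_bigr => Rs; rewrite subsetD1 => /andP[RsU xRs].
have -> : (x |: Rs) :&: S = Rs :&: S.
  apply/setP => y; rewrite !inE; case: (eqVneq y x) => [->|] //=.
  by rewrite (negbTE xS) !andbF.
rewrite cardsU1 xRs add1n exprS.
have -> : U :\: (x |: Rs) = U :\ x :\: Rs by rewrite setDDl setUC.
rewrite (cardsD1 x (U :\: Rs)) inE xRs xU add1n exprS.
have -> : (U :\: Rs) :\ x = U :\ x :\: Rs by rewrite !setDDl setUC.
ring.
Qed.
End Comb.

Theorem proposition4p6 (R : realType) (P : gstruct -> Prop) (k : nat) (rho : nat -> R) :
  preserved_under_quotients P -> (2 <= k)%N ->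
  (forall n, 0 <= rho n <= 1) ->
  (forall l, (3 %| l)%N -> probB' k l rho P <= probB k l rho P) /\
  ((forall eps : R, 0 < eps -> exists N : nat, forall l, (N <= l)%N -> (3 %| l)%N ->
       1 - eps <= probB' k l rho P) ->
   (forall eps : R, 0 < eps -> exists N : nat, forall l, (N <= l)%N -> (3 %| l)%N ->
       1 - eps <= probB k l rho P)).
Proof.
move=> PQ _ hrho.
have main : forall l, probB' k l rho P <= probB k l rho P.
  move=> l; rewrite /probB /probB' /prob_has.
  have /andP[p0 p1] := hrho l.
  set f := fun A : {set l.-tuple (letter k)} => ((asbool (P (pres_of_set A)))%:R : R).
  have := @sum_restrict R _ (Wpl k l) (rho l) f _ (Wl k l) erefl (Wpl_sub k l).
  rewrite /f => <-.
  apply: (@ler_sum R _ _ _ _ _ _) => Rs RsU.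
  apply: ler_wpM2l.
    by apply: mulr_ge0; apply: exprn_ge0; rewrite // subr_ge0.
  rewrite ler_nat; case: asboolP => //= HA.
  by rewrite (asboolT (quot_sub PQ (subsetIl Rs (Wpl k l)) HA)).
split; first by move=> l _; exact: main.
move=> H eps e0; case: (H eps e0) => N HN; exists N => l Nl dl.
exact: le_trans (HN l Nl dl) (main l).
Qed.
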